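(* Let $\lambda_{\min}$ be the smallest nonzero eigenvalue of $L$. Then $N-m_V=M-m_H$, and $$\lambda_{\min}\le\frac{N}{N-m_V}=\frac{N}{M-m_H}\le\lambda_N.$$ Moreover, either of the two inequalities is an equality if and only if $\lambda_{\min}=\lambda_N$.
   Context: Let $\Gamma=(V,H,\mathcal C)$ be a hypergraph with real coefficients: $V=\{v_1,\dots,v_N\}$ is a finite set of vertices, $H=(h_1,\dots,h_M)$ is a finite family of subsets $h_j\subseteq V$ called hyperedges (repetitions allowed; hyperedges are distinguished by their index), and $\mathcal C=\{C_{v,h}\in\mathbb R\}$ is a family of real coefficients with $C_{v,h}=0$ if and only if $v\notin h$. Standing assumptions: every vertex lies in at least one hyperedge, and $\Gamma$ is connected. The degree of $v$ is $\deg v=\sum_{h\in H}C_{v,h}^2>0$. The vertex normalized Laplacian is $Lf(v)=\frac{1}{\deg v}\sum_{h\in H}C_{v,h}\sum_{w\in V}C_{w,h}f(w)$ for $f:V\to\mathbb R$; its eigenvalues (real and non-negative) are $\lambda_1\le\dots\le\lambda_N$. The hyperedge normalized Laplacian is $L^H\gamma(h)=\sum_{v\in V}\frac{C_{v,h}}{\deg v}\sum_{h'\in H}C_{v,h'}\gamma(h')$ for $\gamma:H\to\mathbb R$. Here $m_V$ and $m_H$ are the multiplicities of the eigenvalue $0$ of $L$ and of $L^H$ respectively. *)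

(* Defs.v *)
From mathcomp Require Import all_boot all_order all_algebra.
Set Implicit Arguments. Unset Strict Implicit. Unset Printing Implicit Defensive.
Import Order.TTheory GRing.Theory Num.Theory.
Local Open Scope ring_scope.

(* A hypergraph with real coefficients on vertex set 'I_N and hyperedge
   family 'I_M is encoded by its coefficient matrix C : 'M_(N, M),
   C v h = C_{v,h}; the hyperedge h is the set {v | C v h != 0}. *)
Section Hyper.
Variables (R : realFieldType) (N M : nat).
Variable C : 'M[R]_(N, M).

Definition hdeg (v : 'I_N) : R := \sum_(h < M) C v h ^+ 2.

Definition every_vertex_covered : Prop := forall v : 'I_N, exists h : 'I_M, C v h != 0.

Definition hadj : rel 'I_N := fun u w => [exists h : 'I_M, (C u h != 0) && (C w h != 0)].

Definition hconnected : Prop := forall u w : 'I_N, connect hadj u w.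

Definition vLap : 'M[R]_N :=
  \matrix_(v, w) ((hdeg v)^-1 * \sum_(h < M) C v h * C w h).

Definition hLap : 'M[R]_M :=
  \matrix_(h, h') (\sum_(v < N) C v h / hdeg v * C v h').

Definition mV : nat := mup 0 (char_poly vLap).
Definition mH : nat := mup 0 (char_poly hLap).
End Hyper.

(* Main.v *)
Require Import Defs.
From mathcomp Require Import all_boot all_order all_algebra.
From mathcomp Require Import zify.
Import Order.TTheory GRing.Theory Num.Theory.
Local Open Scope ring_scope.
Lemma sylv (F : fieldType) n m (A : 'M[F]_(n,m)) (B : 'M[F]_(m,n)) :
  'X^m * char_poly (A *m B) = 'X^n * char_poly (B *m A).
Proof.
pose a := map_mx polyC A; pose b := map_mx polyC B.
pose P := block_mx ('X%:M) a b (1%:M : 'M[{poly F}]_m).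
have E1 : \det (block_mx 1%:M (-a) 0 ('X%:M) *m P) = 'X^m * char_poly (A *m B).
  rewrite mulmx_block !mul1mx !mul0mx !add0r mulNmx mulmx1 addrN.
  rewrite det_lblock mulmx1 det_scalar mulrC /char_poly /char_poly_mx map_mxM.
  by rewrite -/a -/b.
have E2 : \det (block_mx 1%:M 0 (-b) ('X%:M) *m P) = 'X^n * char_poly (B *m A).
  rewrite mulmx_block !mul1mx !mul0mx !addr0 mulNmx mulmx1 scalar_mxC addNr.

  rewrite det_ublock det_scalar /char_poly /char_poly_mx map_mxM.
  by rewrite -/a -/b addrC mulNmx.
by rewrite -E1 -E2 !det_mulmx det_ublock det_lblock !det_scalar.
Qed.
Lemma psum_seq_eq0 (R : realDomainType) (I : eqType) (r : seq I) (P : pred I) (F : I -> R) :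
  (forall i, i \in r -> P i -> 0 <= F i) -> \sum_(i <- r | P i) F i = 0 ->
  forall i, i \in r -> P i -> F i = 0.
Proof.
elim: r => [|j r IH] H0 Hs i //.
have Hr : forall i, i \in r -> P i -> 0 <= F i.
  by move=> k kr; apply: H0; rewrite inE kr orbT.
have Hge : 0 <= \sum_(i <- r | P i) F i by rewrite big_seq_cond sumr_ge0 // => k /andP [] /Hr.
move: Hs; rewrite big_cons; case: ifP => Pj Hs.
  have /andP [] : (F j == 0) && (\sum_(i <- r | P i) F i == 0).
    by rewrite -paddr_eq0 ?Hs // H0 // mem_head.
  move=> /eqP Fj /eqP Hs'.
  rewrite inE => /orP [/eqP -> | ir] Pi; first by [].
  exact: IH.
rewrite inE => /orP [/eqP -> | ir] Pi; first by rewrite Pj in Pi.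
exact: IH.
Qed.

Lemma sum_const_cond (R : realFieldType) (r : seq R) (P : pred R) (c : R) :
  \sum_(x <- r | P x) c = (count P r)%:R * c.
Proof. by rewrite big_const_seq iter_addr_0 mulr_natl. Qed.

Lemma real_part (R : realFieldType) (lam : seq R) (K : nat) (S lmin lamN : R) :
  0 < S -> \sum_(x <- lam) x = S -> count (fun x => x != 0) lam = K ->
  lmin \in lam -> lmin != 0 -> (forall x, x \in lam -> x != 0 -> lmin <= x) ->
  (forall x, x \in lam -> x <= lamN) -> lamN \in lam ->
  let r := S / K%:R in
  lmin <= r /\ r <= lamN /\ (lmin = r <-> lmin = lamN) /\ (r = lamN <-> lmin = lamN).
Proof.
move=> S0 HS HK lin lnz lmin_le le_lamN lamNin r.
have HS' : \sum_(x <- lam | x != 0) x = S.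
  rewrite -HS [RHS](bigID (fun x => x != 0)) /= [X in _ = _ + X]big1 ?addr0 //.
  by move=> x /negPn /eqP.
have K0 : (0 < K)%N.
  rewrite lt0n; apply/eqP => K0; move: HS'; rewrite -big_filter.
  have -> : [seq x <- lam | x != 0] = [::].
    by apply/eqP; rewrite -size_eq0 size_filter HK K0.
  by rewrite big_nil => S00; move: S0; rewrite -S00 ltxx.
have Kp : 0 < K%:R :> R by rewrite ltr0n.
have lminr : lmin <= r.
  rewrite /r ler_pdivlMr // mulrC -HK -sum_const_cond -HS'.
  rewrite big_seq_cond [X in _ <= X]big_seq_cond; apply: (@ler_sum _ _ lam _ (fun=> lmin) (fun x => x)) => x /andP [xi xn]; exact: lmin_le.
have rlamN : r <= lamN.
  rewrite /r ler_pdivrMr // mulrC -HK -sum_const_cond -HS'.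
  rewrite big_seq_cond [X in _ <= X]big_seq_cond; apply: (@ler_sum _ _ lam _ (fun x => x) (fun=> lamN)) => x /andP [xi xn]; exact: le_lamN.
have r0 : 0 < r by rewrite /r divr_gt0.
(* all nonzero = lmin if lmin = lamN *)
have fwd : lmin = lamN -> lmin = r.
  move=> E.
  have HS2 : \sum_(x <- lam | x != 0) x = \sum_(x <- lam | x != 0) lmin.
    rewrite big_seq_cond [RHS]big_seq_cond; apply: eq_bigr => x /andP [xin xnz].
    by apply/eqP; rewrite eq_le lmin_le // andbT E le_lamN.
  move: HS2; rewrite HS' sum_const_cond HK /r => ->.
  by rewrite mulrC mulKf // gt_eqF.
split => //; split => //; split.
  split => // E.
  have Hz := @psum_seq_eq0 R R lam (fun x => x != 0) (fun x => x - lmin).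
  have Hsum : \sum_(x <- lam | x != 0) (x - lmin) = 0.
    rewrite big_split /= sumrN sum_const_cond HK (eq_bigr (fun x => x)) // HS' E /r mulrC divfK ?gt_eqF //.
    by rewrite subrr.
  have [lz | lnz'] := eqVneq lamN 0.
    by move: rlamN; rewrite lz leNgt r0.
  apply/eqP; rewrite eq_sym -subr_eq0; apply/eqP.
  apply: (Hz _ Hsum lamN lamNin lnz').
  by move=> x xin xnz; rewrite subr_ge0 lmin_le.
split => [E | E]; last by rewrite -E fwd.
have Hz := @psum_seq_eq0 R R lam (fun x => x != 0) (fun x => lamN - x).
have Hsum : \sum_(x <- lam | x != 0) (lamN - x) = 0.
  rewrite big_split /= sumrN sum_const_cond HK (eq_bigr (fun x => x)) // HS' -E /r mulrC divfK ?gt_eqF //.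
  by rewrite subrr.
apply/eqP; rewrite eq_sym -subr_eq0; apply/eqP.
apply: (Hz _ Hsum lmin lin lnz).
by move=> x xin xnz; rewrite subr_ge0 le_lamN.
Qed.

Lemma path_le_last (R : realDomainType) (s : seq R) (x : R) :
  path <=%R x s -> forall y, y \in x :: s -> y <= last x s.
Proof.
elim: s x => [|z s IH] x /=.
  by move=> _ y; rewrite inE => /eqP ->.
move=> /andP [xz pz] y; rewrite inE => /orP [/eqP -> | ys].
  exact: le_trans xz (IH z pz z (mem_head _ _)).
exact: IH.
Qed.

Theorem mainTheorem10 (R : realFieldType) (N M : nat) (C : 'M[R]_(N, M))
  (HN : (0 < N)%N)
  (Hcov : every_vertex_covered C)
  (Hconn : hconnected C)
  (lam : seq R)
  (Hsize : size lam = N)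
  (Hsorted : sorted <=%R lam)
  (Heig : char_poly (vLap C) = \prod_(x <- lam) ('X - x%:P))
  (lmin : R)
  (Hlmin_in : lmin \in lam) (Hlmin_nz : lmin != 0)
  (Hlmin_le : forall x, x \in lam -> x != 0 -> lmin <= x) :
  let lamN := last 0 lam in
  let rV : R := N%:R / (N - mV C)%:R in
  let rH : R := N%:R / (M - mH C)%:R in
  (N - mV C = M - mH C)%N /\
  lmin <= rV /\
  rV = rH /\
  rH <= lamN /\
  (lmin = rV <-> lmin = lamN) /\
  (rH = lamN <-> lmin = lamN).
Proof.
move=> lamN rV rH.
have hdeg_nz : forall v, hdeg C v != 0.
  move=> v; apply/eqP => H0; have [h Hh] := Hcov v.
  have := @psumr_eq0P R _ xpredT (fun h => C v h ^+ 2) (fun i _ => sqr_ge0 _) H0 h isT.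
  by move/eqP; rewrite sqrf_eq0 (negbTE Hh).
pose A := \matrix_(v, h) ((hdeg C v)^-1 * C v h).
have LV : vLap C = A *m C^T.
  apply/matrixP => v w; rewrite !mxE mulr_sumr; apply: eq_bigr => h _.
  by rewrite !mxE mulrA.
have LH : hLap C = C^T *m A.
  apply/matrixP => h h'; rewrite !mxE; apply: eq_bigr => v _.
  by rewrite !mxE mulrA.
have Hm : (M + mV C = N + mH C)%N.
  have S := congr1 (mup 0) (@sylv _ _ _ A C^T).
  rewrite !mupM ?expf_neq0 ?polyX_eq0 ?monic_neq0 ?char_poly_monic // in S.
  have XE : ('X : {poly R}) = 'X - 0%:P by rewrite subr0.
  by rewrite XE !mup_XsubCX eqxx /mV /mH LV LH in S *.
have H1 : (N - mV C = M - mH C)%N by lia.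
have cnt : mV C = count_mem 0 lam by rewrite /mV Heig mu_prod_XsubC.
have HK : count (fun x => x != 0) lam = (N - mV C)%N.
  rewrite cnt -Hsize -(count_predC (pred1 0) lam) addKn.
  by apply: eq_count => x.
have sumlam : \sum_(x <- lam) x = N%:R.
  have := @char_poly_trace _ _ (vLap C) HN.
  rewrite Heig -{1}Hsize coefPn_prod_XsubC ?Hsize -?lt0n // => /oppr_inj ->.
  rewrite /mxtrace (eq_bigr (fun _ => 1)) ?sumr_const ?card_ord //.
  move=> v _; rewrite mxE (eq_bigr (fun h => C v h ^+ 2)) => [|h _].
    exact: (mulVf (hdeg_nz v)).
  by rewrite expr2.
have lamN_in : lamN \in lam.
  have gen : forall s : seq R, size s = N -> last 0 s \in s.
    case=> [|a s] /= E; last exact: mem_last.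
    by rewrite -E in HN.
  exact: gen.
have le_lamN : forall x, x \in lam -> x <= lamN.
  have gen : forall s : seq R, sorted <=%R s -> forall x, x \in s -> x <= last 0 s.
    by case=> [|a s] //= Hs x xin; exact: path_le_last Hs x xin.
  exact: gen.
have N0 : 0 < N%:R :> R by rewrite ltr0n.
have [P1 [P2 [P3 P4]]] := @real_part R lam (N - mV C) N%:R lmin lamN
  N0 sumlam HK Hlmin_in Hlmin_nz Hlmin_le le_lamN lamN_in.
have E : rV = rH by rewrite /rV /rH H1.
by rewrite -E.
Qed.
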